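(* If $T$ is a tree with $n$ vertices that contains a perfect matching and has maximum degree $\Delta(T)=3$, then $\nu_{2}(T) \geq \frac{3n-2}{4}$.
   Context: $\nu_2(T)$ is the maximum number of edges of a $2$-edge-colorable subgraph of $T$, i.e. the maximum total size of two edge-disjoint matchings of $T$. *)

(* Defs.v *)
From mathcomp Require Import all_boot.
Set Implicit Arguments. Unset Strict Implicit. Unset Printing Implicit Defensive.

Section Graph.
Variable T : finType.
Variable e : rel T.

Definition simple_graph := irreflexive e /\ symmetric e.

Definition edges : {set {set T}} :=
  [set E : {set T} | [exists x, exists y, e x y && (E == [set x; y])]].

(* tree: connected and acyclic, equivalently (for a finite nonempty graph)
   connected with |E| = |V| - 1 *)
Definition is_tree :=
  0 < #|T| /\ (forall x y : T, connect e x y) /\ #|edges| = #|T| - 1.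

Definition deg (x : T) : nat := #|[set y | e x y]|.

Definition max_degree : nat := \max_(x : T) deg x.

Definition matching (M : {set {set T}}) :=
  (M \subset edges) &&
  [forall E1 in M, forall E2 in M, (E1 != E2) ==> [disjoint E1 & E2]].

Definition perfect_matching (M : {set {set T}}) :=
  matching M && [forall x, exists E in M, x \in E].

Definition has_perfect_matching := exists M, perfect_matching M.

Definition two_matchings (P : {set {set T}} * {set {set T}}) :=
  [&& matching P.1, matching P.2 & [disjoint P.1 & P.2]].

Definition nu2 : nat :=
  \max_(P : {set {set T}} * {set {set T}} | two_matchings P) (#|P.1| + #|P.2|).

End Graph.

(* Main.v *)
Require Import Defs.
From mathcomp Require Import all_boot.
From mathcomp Require Import zify.
Set Implicit Arguments. Unset Strict Implicit. Unset Printing Implicit Defensive.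

Definition dg (T : finType) (F : {set {set T}}) (x : T) := #|[set E in F | x \in E]|.

Lemma edge_card (T : finType) (e : rel T) E :
  simple_graph e -> E \in edges e -> #|E| = 2.
Proof.
move=> [irr sym]; rewrite inE => /existsP[x /existsP[y /andP[exy /eqP ->]]].
rewrite cards2; case: eqP => // exy'; by rewrite exy' irr in exy.
Qed.

Lemma edge_at (T : finType) (e : rel T) E x :
  simple_graph e -> E \in edges e -> x \in E -> exists w, e x w /\ E = [set x; w].
Proof.
move=> [irr sym]; rewrite inE => /existsP[a /existsP[b /andP[eab /eqP ->]]].
rewrite !inE => /orP[] /eqP ->.
  by exists b.
exists a; split; first by rewrite sym.
by rewrite setUC.
Qed.

Lemma dcount (T : finType) (e : rel T) (F : {set {set T}}) :
  simple_graph e -> F \subset edges e -> \sum_x dg F x = 2 * #|F|.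
Proof.
move=> sg sF.
have H : forall x, dg F x = \sum_(E in F) (x \in E).
  move=> x; rewrite /dg -sum1_card big_mkcond [RHS]big_mkcond /=.
  apply: eq_bigr => E _; rewrite inE; case: (E \in F); case: (x \in E); reflexivity.
rewrite (eq_bigr _ (fun x _ => H x)) exchange_big /=.
rewrite (eq_bigr (fun _ => 2)); first by rewrite sum_nat_const mulnC.
move=> E EF.
rewrite -(edge_card sg (subsetP sF _ EF)) -sum1_card [RHS]big_mkcond /=.
apply: eq_bigr => x _; case: (x \in E); reflexivity.
Qed.

Lemma cross (T : finType) (e : rel T) (S : {set T}) x y :
  connect e x y -> x \in S -> y \notin S -> exists a b, [/\ e a b, a \in S & b \notin S].
Proof.
case/connectP => p; elim: p x => [|z p IH] x /=.
  by move=> _ -> ->.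
case/andP => exz pz yl xS yS.
case zS: (z \in S).
  exact: IH pz yl zS yS.
by exists x, z; rewrite zS.
Qed.

Definition inside (T : finType) (e : rel T) (S : {set T}) :=
  [set E in edges e | E \subset S].

Lemma lemC (T : finType) (e : rel T) k (S : {set T}) :
  (forall x y, connect e x y) -> #|~: S| = k -> S != set0 ->
  #|inside e S| + (#|T| - #|S|) <= #|edges e|.
Proof.
move=> conn; elim: k S => [|k IH] S hk hS.
  have -> : #|T| - #|S| = 0 by have := cardsC S; lia.
  rewrite addn0; apply: subset_leq_card; apply/subsetP => E; rewrite inE; by case/andP.
have [y yS] : exists y, y \in ~: S by apply/card_gt0P; rewrite hk.
have [x0 x0S] := set0Pn _ hS.
rewrite inE in yS.
have [a [b [eab aS bS]]] := cross (conn x0 y) x0S yS.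
have hk' : #|~: (b |: S)| = k.
  have := cardsC (b |: S); have := cardsC S; rewrite cardsU1 bS; lia.
have hS' : b |: S != set0 by apply/set0Pn; exists b; rewrite !inE eqxx.
have := IH _ hk' hS'.
have hlt : #|inside e S| < #|inside e (b |: S)|.
  apply: proper_card; apply/properP; split.
    apply/subsetP => E; rewrite !inE => /andP[-> sub]; apply: subset_trans sub _.
    exact: subsetU1.
  exists [set a; b].
    rewrite !inE; apply/andP; split.
      by apply/existsP; exists a; apply/existsP; exists b; rewrite eab eqxx.
    by rewrite subUset !sub1set !inE eqxx aS orbT.
  by rewrite !inE negb_and; apply/orP; right; rewrite subUset !sub1set (negbTE bS) andbF.
have := cardsC S; have := cardsC (b |: S); rewrite cardsU1 bS; lia.
Qed.

Lemma lemA (T : finType) (e : rel T) (F : {set {set T}}) :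
  simple_graph e -> is_tree e -> F \subset edges e -> F != set0 ->
  exists x, dg F x = 1.
Proof.
move=> sg [n0 [conn ne]] sF F0.
case: (boolP [exists x, dg F x == 1]) => [/existsP[x /eqP hx]|/existsPn Hn]; first by exists x.
exfalso.
pose U := [set x | 0 < dg F x].
have h1 : 2 * #|U| <= 2 * #|F|.
  rewrite -(dcount sg sF) -sum1_card big_distrr /= big_mkcond /=.
  apply: leq_sum => x _; rewrite inE.
  have := Hn x; case: (dg F x) => [|[|m]] //= _; by rewrite muln1.
have sFU : F \subset inside e U.
  apply/subsetP => E EF; rewrite inE (subsetP sF _ EF) /=.
  apply/subsetP => y yE; rewrite inE /dg; apply/card_gt0P; exists E.
  by rewrite inE EF yE.
have U0 : U != set0.
  have [E EF] := set0Pn _ F0.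
  have [x [w [_ Ex]]] : exists x w, e x w /\ E = [set x; w].
    move: (subsetP sF _ EF); rewrite inE => /existsP[a /existsP[b /andP[eab /eqP ->]]].
    by exists a, b.
  apply/set0Pn; exists x; rewrite inE /dg; apply/card_gt0P; exists E.
  by rewrite inE EF Ex !inE eqxx.
have := lemC conn erefl U0.
have := subset_leq_card sFU.
have := max_card U.
lia.
Qed.

Lemma matchingI (T : finType) (e : rel T) (N : {set {set T}}) :
  N \subset edges e ->
  (forall E1 E2, E1 \in N -> E2 \in N -> E1 != E2 -> [disjoint E1 & E2]) ->
  matching e N.
Proof.
move=> sN H; apply/andP; split => //.
apply/forallP => E1; apply/implyP => E1N; apply/forallP => E2; apply/implyP => E2N.
apply/implyP; exact: H.
Qed.

Lemma matchingE (T : finType) (e : rel T) (N : {set {set T}}) :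
  matching e N ->
  N \subset edges e /\
  (forall E1 E2, E1 \in N -> E2 \in N -> E1 != E2 -> [disjoint E1 & E2]).
Proof.
case/andP => sN /forallP H; split => // E1 E2 E1N E2N.
by move: (H E1); rewrite E1N /= => /forallP /(_ E2); rewrite E2N /= => /implyP.
Qed.

Lemma lemB (T : finType) (e : rel T) k :
  simple_graph e -> is_tree e -> forall F : {set {set T}}, #|F| <= k ->
  F \subset edges e -> (forall x, dg F x <= 2) ->
  exists N, [/\ matching e N, N \subset F & #|F| <= 2 * #|N|].
Proof.
move=> sg tr; elim: k => [|k IH] F hk sF hdeg.
  exists set0; split.
  - by apply: matchingI => [|E1 E2]; rewrite ?sub0set ?inE.
  - exact: sub0set.
  - by move: hk; rewrite cards0; lia.
case: (eqVneq F set0) => [->|F0].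
  exists set0; split.
  - by apply: matchingI => [|E1 E2]; rewrite ?sub0set ?inE.
  - exact: sub0set.
  - by rewrite cards0.
have [x hx] := lemA sg tr sF F0.
have /cards1P [E0 hE0] : #|[set E in F | x \in E]| == 1 by rewrite -/(dg F x) hx.
have : E0 \in [set E in F | x \in E] by rewrite hE0 inE.
rewrite inE => /andP[E0F xE0].
have [w [exw E0e]] := edge_at sg (subsetP sF _ E0F) xE0.
pose F2 := F :\: [set E : {set T} | w \in E].
have hF2 : #|[set E in F | w \in E]| + #|F2| = #|F|.
  have -> : [set E in F | w \in E] = F :&: [set E : {set T} | w \in E].
    by apply/setP => E; rewrite !inE.
  exact: cardsID.
have hw := hdeg w; rewrite /dg in hw.
have E0w : w \in E0 by rewrite E0e !inE eqxx orbT.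
have hlt : 0 < #|[set E in F | w \in E]|.
  by apply/card_gt0P; exists E0; rewrite inE E0F E0w.
have sF2F : F2 \subset F by apply: subsetDl.
have hdeg2 : forall y, dg F2 y <= 2.
  move=> y; apply: leq_trans (hdeg y); apply: subset_leq_card.
  apply/subsetP => E; rewrite !inE => /andP[/andP[_ ->] ->]; by [].
have [N2 [mN2 sN2 cN2]] := IH F2 ltac:(lia) (subset_trans sF2F sF) hdeg2.
have E0N2 : E0 \notin N2.
  apply/negP => /(subsetP sN2); by rewrite !inE E0w.
exists (E0 |: N2); split.
- have [sN2e dN2] := matchingE mN2.
  apply: matchingI.
    by rewrite subUset sub1set (subsetP sF _ E0F) sN2e.
  have key : forall E, E \in N2 -> E != E0 -> [disjoint E0 & E].
    move=> E EN2 _.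
    have := subsetP sN2 _ EN2; rewrite !inE => /andP[wE EF].
    have xE : x \notin E.
      apply/negP => xE.
      have : E \in [set E in F | x \in E] by rewrite inE EF xE.
      rewrite hE0 inE => /eqP EE0; by rewrite EE0 E0w in wE.
    by rewrite E0e disjoints_subset subUset !sub1set !inE xE.
  move=> E1 E2; rewrite !inE => /orP[/eqP->|h1] /orP[/eqP->|h2] ne.
  + by rewrite eqxx in ne.
  + by apply: key => //; rewrite eq_sym.
  + by rewrite disjoint_sym; apply: key.
  + exact: dN2.
- by rewrite subUset sub1set E0F (subset_trans sN2 sF2F).
- rewrite cardsU1 E0N2; lia.
Qed.

Theorem corollary2 (T : finType) (e : rel T) :
  simple_graph e -> is_tree e -> has_perfect_matching e -> max_degree e = 3 ->
  3 * #|T| <= 4 * nu2 e + 2.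
Proof.
move=> sg tr [M /andP[mM /forallP covM]] md.
have [sM dM] := matchingE mM.
have [n0 [conn ne]] := tr.
have degM : forall x, dg M x = 1.
  move=> x; apply/eqP; rewrite eqn_leq; apply/andP; split.
    apply/card_le1P => E1; rewrite inE => /andP[E1M xE1] E2; rewrite !inE.
    apply/idP/idP => [/andP[E2M xE2]|/eqP->]; last by rewrite E1M xE1.
    apply/negPn/negP => ne12.
    have := dM _ _ E2M E1M ne12; rewrite -setI_eq0 => /eqP/setP/(_ x).
    by rewrite !inE xE1 xE2.
  have /existsP[E /andP[EM xE]] := covM x.
  by apply/card_gt0P; exists E; rewrite inE EM xE.
have hM : 2 * #|M| = #|T|.
  rewrite -(dcount sg sM) (eq_bigr (fun _ => 1)); last by move=> x _; apply: degM.
  by rewrite sum1_card.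
pose F := edges e :\: M.
have sF : F \subset edges e by apply: subsetDl.
have cF : #|F| = #|edges e| - #|M|.
  by rewrite cardsD (setIidPr sM).
have degE : forall x, dg (edges e) x <= 3.
  move=> x; rewrite -md /max_degree; apply: (leq_trans _ (@leq_bigmax _ (deg e) x)).
  apply: (leq_trans _ (leq_imset_card (fun y => [set x; y]) [set y | e x y])).
  apply: subset_leq_card; apply/subsetP => E; rewrite inE => /andP[EE xE].
  have [w [exw ->]] := edge_at sg EE xE.
  by apply/imsetP; exists w; rewrite ?inE.
have degF : forall x, dg F x <= 2.
  move=> x; have := degE x; have := degM x.
  have := cardsUI [set E in F | x \in E] [set E in M | x \in E].
  have -> : [set E in F | x \in E] :&: [set E in M | x \in E] = set0.
    by apply/setP => E; rewrite !inE; case: (E \in M); rewrite ?andbF.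
  have : #|[set E in F | x \in E] :|: [set E in M | x \in E]| <= dg (edges e) x.
    apply: subset_leq_card; apply/subsetP => E /setUP[]; rewrite in_set => /andP[EF xE];
      rewrite in_set xE andbT; [exact: (subsetP sF _ EF) | exact: (subsetP sM _ EF)].
  rewrite cards0 /dg; lia.
have [N [mN sNF cN]] := @lemB _ e #|F| sg tr F (leqnn _) sF degF.
have tm : two_matchings e (M, N).
  apply/and3P; split => //=.
  rewrite disjoint_sym disjoints_subset; apply: subset_trans sNF _.
  by apply/subsetP => E; rewrite !inE => /andP[].
have := @leq_bigmax_cond _ (two_matchings e) (fun P : {set {set T}} * {set {set T}} => #|P.1| + #|P.2|) _ tm.
rewrite -/(nu2 e) /= => hnu.
move: cN cF ne hM hnu n0; clear; move: #|F| => f.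
move=> h1 h2 h3 h4 h5 h6; set n := #|T| in h3 h4 h6 *; clearbody n.
set m := #|M| in h2 h4 h5; set k := #|N| in h1 h5; set g := #|edges e| in h2 h3; set v := nu2 e in h5 *.
clearbody m k g v; lia.
Qed.
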